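(* Let $F$ be a forest, let $k,s\ge 0$ be integers, and for $1\le i\le s$ let $\mathcal{F}_i$ be a set of $s!\,k$ paths of $F$ that are pairwise anticomplete. Then there exist $P^i_1,\ldots,P^i_k\in\mathcal{F}_i$ for $1\le i\le s$ such that these $sk$ paths are pairwise anticomplete.
   Context: Two subgraphs of a graph are anticomplete if their vertex sets are disjoint and no edge of the graph joins a vertex of one to a vertex of the other. *)

(* Defs.v *)
From mathcomp Require Import all_boot.
Set Implicit Arguments. Unset Strict Implicit. Unset Printing Implicit Defensive.

Definition simple_graph (T : finType) (e : rel T) : Prop :=
  symmetric e /\ irreflexive e.

Definition forest (T : finType) (e : rel T) : Prop :=
  simple_graph e /\
  forall c : seq T, uniq c -> 3 <= size c -> ~~ cycle e c.

Definition is_gpath (T : finType) (e : rel T) (A : {set T}) : Prop :=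
  exists (x : T) (p : seq T), [/\ uniq (x :: p), path e x p & A = [set:: x :: p]].

Definition anticomplete (T : finType) (e : rel T) (A B : {set T}) : bool :=
  [disjoint A & B] && [forall x in A, forall y in B, ~~ e x y].

(* Main.v *)
Require Import Defs.
From mathcomp Require Import all_boot.
Set Implicit Arguments. Unset Strict Implicit. Unset Printing Implicit Defensive.

Section S.
Variables (T : finType) (e : rel T).
Hypothesis esym : symmetric e.
Hypothesis eirr : irreflexive e.
Hypothesis nocyc : forall c : seq T, uniq c -> 3 <= size c -> ~~ cycle e c.

Lemma head_nb x p w : uniq (x :: p) -> path e x p -> w \in p -> e x w ->
  exists r, p = w :: r.
Proof.
move=> U Pa wp; case/splitPr: wp U Pa => p1 p2.
case: p1 => [|a p1] U Pa exw; first by exists p2.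
exfalso.
move: U; rewrite -cat_cons -cat_rcons cat_uniq => /andP [U _].
move: Pa; rewrite -cat_rcons cat_path => /andP [Pa _].
have := nocyc U; rewrite /= size_rcons ltnS => /(_ isT).
move=> H; move: Pa; rewrite /= in H *.
move: H; rewrite rcons_path last_rcons (esym w x) exw andbT.
by move=> /negP.
Qed.

Definition leaf (W : {set T}) v :=
  [forall y in W, forall z in W, e v y ==> e v z ==> (y == z)].

Lemma leafP (W : {set T}) v : reflect (forall y z, y \in W -> z \in W -> e v y -> e v z -> y = z)
   (leaf W v).
Proof.
apply: (iffP forallP) => [H y z yW zW vy vz|H y].
  by move: (H y); rewrite yW /= => /forallP /(_ z); rewrite zW vy vz /= => /eqP.
apply/implyP=> yW; apply/forallP => z; apply/implyP => zW.
by apply/implyP => vy; apply/implyP => vz; apply/eqP; apply: H.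
Qed.

Lemma leaf_ex (W : {set T}) : W != set0 -> exists2 v, v \in W & leaf W v.
Proof.
move=> /set0Pn [x0 x0W].
case: (boolP [exists v in W, leaf W v]) => [/exists_inP [v vW lv]|H]; first by exists v.
exfalso.
have nl v : v \in W -> exists y z, [/\ y \in W, z \in W, e v y, e v z & y != z].
  move=> vW; have : ~~ leaf W v by apply: contra H => lv; apply/exists_inP; exists v.
  case/forallPn => y; rewrite negb_imply => /andP [yW /forallPn [z]].
  rewrite negb_imply => /andP [zW]; rewrite !negb_imply => /andP [vy /andP [vz ne]].
  by exists y, z.
have Wp n : exists x p, [/\ size p = n, uniq (x :: p), path e x p & all (fun z => z \in W) (x :: p)].
  elim: n => [|n [x [p [sp U Pa A]]]]; first by exists x0, [::]; rewrite /= x0W.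
  have xW : x \in W by move: A => /= /andP [].
  have [y [z [yW zW xy xz yz]]] := nl x xW.
  suff [w [wW xw wn]] : exists w, [/\ w \in W, e x w & w \notin x :: p].
    exists w, (x :: p); rewrite /= sp.
    move: U A => /= /andP [-> ->] /andP [-> ->]; by rewrite wn wW esym xw Pa.
  case: (boolP (y \in x :: p)) => yp; last by exists y.
  case: (boolP (z \in x :: p)) => zp; last by exists z.
  exfalso.
  have yp' : y \in p by move: yp; rewrite inE => /orP [/eqP yx|//]; move: xy; rewrite -yx eirr.
  have zp' : z \in p by move: zp; rewrite inE => /orP [/eqP zx|//]; move: xz; rewrite -zx eirr.
  have [r1 e1] := head_nb U Pa yp' xy.
  have [r2 e2] := head_nb U Pa zp' xz.
  by move: yz; rewrite e1 in e2; case: e2 => ->; rewrite eqxx.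
have [x [p [sp U _ _]]] := Wp #|T|.
have := max_card (mem (x :: p)); rewrite (card_uniqP U) /= sp ltnn //.
Qed.

Lemma in_sseq (s : seq T) z : (z \in [set:: s]) = (z \in s).
Proof. by rewrite inE. Qed.

Lemma rem_leaf (W : {set T}) P v : is_gpath e P -> P \subset W -> v \in P ->
  leaf W v -> P != [set v] ->
  is_gpath e (P :\ v) /\ exists2 u, u \in P & e v u.
Proof.
move=> [x [p [U Pa ->]]] sW vP /leafP lv ne.
rewrite in_sseq inE in vP; case/orP: vP => [/eqP vx|vp].
  subst v; case: p U Pa ne sW => [|y p] U Pa ne sW.
    by move: ne; rewrite (_ : [set:: [:: x]] = [set x]) ?eqxx //; apply/setP => z; rewrite !inE.
  split; last (exists y; [by rewrite in_sseq !inE eqxx orbT | by case/andP: Pa]).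
  exists y, p; split; [by case/andP: U | by case/andP: Pa|].
  apply/setP => z; rewrite !inE; case: (eqVneq z x) => [->|//] /=.
  by move: U => /= /andP []; rewrite inE negb_or => /andP [/negbTE -> /negbTE ->].
case/splitPr: vp U Pa sW ne => p1 p2 U Pa sW ne.
move: Pa; rewrite cat_path /= => /andP [Pa1 /andP [ev Pa2]].
have lW : last x p1 \in W.
  by apply: (subsetP sW); rewrite in_sseq -cat_cons mem_cat mem_last.
case: p2 U Pa2 sW ne => [|z p2] U Pa2 sW ne.
  split; last by exists (last x p1); rewrite ?in_sseq -?cat_cons ?mem_cat ?mem_last // esym.
  exists x, p1; split => //.
    by move: U; rewrite -cat_cons cat_uniq => /andP [].
  apply/setP => w; rewrite !inE mem_cat inE.
  case: (eqVneq w v) => [->|] /=; last by rewrite orbF.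
  move: U; rewrite -cat_cons cat_uniq /= andbT orbF => /andP [_].
  by rewrite inE negb_or => /andP [/negbTE -> /negbTE ->].
exfalso.
have zW : z \in W by apply: (subsetP sW); rewrite in_sseq -cat_cons mem_cat !inE eqxx !orbT.
move: Pa2 => /andP [vz _].
have ev' : e v (last x p1) by rewrite esym.
have lz := lv _ _ lW zW ev' vz.
move: U; rewrite -cat_cons cat_uniq => /andP [_ /andP [H _]].
move: H => /= /norP [_ /norP [+ _]].
by rewrite -lz mem_last.
Qed.

Definition touch (P Q : {set T}) :=
  exists x y, [/\ x \in P, y \in Q & (x == y) || e x y].

Lemma touchP P Q : reflect (touch P Q) (~~ anticomplete e P Q).
Proof.
rewrite /anticomplete negb_and; apply: (iffP orP) => [[D|F]|[x [y [xP yQ xy]]]].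
- move: D; rewrite -setI_eq0 => /set0Pn [x]; rewrite inE => /andP [xP xQ].
  by exists x, x; rewrite xP xQ eqxx.
- case/forallPn: F => x; rewrite negb_imply => /andP [xP /forallPn [y]].
  by rewrite negb_imply negbK => /andP [yQ exy]; exists x, y; rewrite xP yQ exy orbT.
- case/orP: xy => [/eqP exy|exy]; [left|right].
    by rewrite -setI_eq0; apply/set0Pn; exists x; rewrite inE xP exy yQ.
  apply/forallPn; exists x; rewrite xP /=; apply/forallPn; exists y.
  by rewrite yQ exy.
Qed.

Lemma touch_sym P Q : touch P Q -> touch Q P.
Proof.
by move=> [x [y [xP yQ xy]]]; exists y, x; rewrite eq_sym esym.
Qed.

Lemma gpath_n0 P : is_gpath e P -> exists x, x \in P.
Proof. by move=> [x [p [_ _ ->]]]; exists x; rewrite in_sseq inE eqxx. Qed.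

Lemma touch_one (W : {set T}) v P Q x y : is_gpath e P -> is_gpath e Q ->
  P \subset W -> Q \subset W -> leaf W v -> P != [set v] -> Q != [set v] ->
  x \in P -> y \in Q -> (x == y) || e x y -> x = v -> touch (P :\ v) (Q :\ v).
Proof.
move=> gP gQ sP sQ lv nP nQ xP yQ xy xv; subst x.
have [_ [uP uPP vuP]] := rem_leaf gP sP xP lv nP.
have uPv : uP != v by apply: contraTneq vuP => ->; rewrite eirr.
have uPW : uP \in W := subsetP sP _ uPP.
case/orP: xy => [/eqP vy|vy].
  subst y; have [_ [uQ uQQ vuQ]] := rem_leaf gQ sQ yQ lv nQ.
  have uQW : uQ \in W := subsetP sQ _ uQQ.
  have := leafP _ _ lv _ _ uPW uQW vuP vuQ => equ; subst uQ.
  by exists uP, uP; rewrite !inE uPv uPP uQQ eqxx.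
have yW : y \in W := subsetP sQ _ yQ.
have := leafP _ _ lv _ _ uPW yW vuP vy => equ; subst y.
by exists uP, uP; rewrite !inE uPv uPP yQ eqxx.
Qed.

Lemma touch_rem (W : {set T}) v P Q : is_gpath e P -> is_gpath e Q ->
  P \subset W -> Q \subset W -> leaf W v -> P != [set v] -> Q != [set v] ->
  touch P Q -> touch (P :\ v) (Q :\ v).
Proof.
move=> gP gQ sP sQ lv nP nQ [x [y [xP yQ xy]]].
case: (eqVneq x v) => xv; first exact: touch_one gP gQ sP sQ lv nP nQ xP yQ xy xv.
case: (eqVneq y v) => yv.
  apply: touch_sym; apply: touch_one gQ gP sQ sP lv nQ nP yQ xP _ yv.
  by rewrite eq_sym esym.
by exists x, y; rewrite !inE xv yv xP yQ.
Qed.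

Lemma key n (W : {set T}) (S : {set {set T}}) : #|W| <= n ->
  (forall P, P \in S -> is_gpath e P /\ P \subset W) -> S != set0 ->
  exists P a b, [/\ P \in S, (a == b) || e a b &
    forall Q, Q \in S -> ~~ anticomplete e P Q -> (a \in Q) || (b \in Q)].
Proof.
elim: n W S => [|n IH] W S cW hS /set0Pn [P0 P0S].
  have [gP sP] := hS _ P0S; have [x xP] := gpath_n0 gP.
  by move: cW; rewrite leqn0 cards_eq0 => /eqP W0; move: (subsetP sP _ xP); rewrite W0 inE.
have [gP0 sP0] := hS _ P0S; have [x0 x0P] := gpath_n0 gP0.
have Wn : W != set0 by apply/set0Pn; exists x0; exact: (subsetP sP0 _ x0P).
have [v vW lv] := leaf_ex Wn.
case: (boolP ([set v] \in S)) => vS.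
  have hv Q b : Q \in S -> ~~ anticomplete e [set v] Q ->
      (forall y, y \in W -> e v y -> y = b) -> (v \in Q) || (b \in Q).
    move=> QS /touchP [x [y [+ yQ xy]]] H; rewrite inE => /eqP xv; subst x.
    case/orP: xy => [/eqP vy|vy]; first by subst y; rewrite yQ.
    have [_ sQ] := hS _ QS.
    by rewrite -(H y (subsetP sQ _ yQ) vy) yQ orbT.
  case: (boolP [exists u in W, e v u]) => [/exists_inP [u uW vu]|nu].
    exists [set v], v, u; rewrite vu orbT; split => // Q QS nQ; apply: hv => // y yW vy.
    exact: (leafP _ _ lv _ _ yW uW vy vu).
  exists [set v], v, v; rewrite eqxx; split => // Q QS nQ; apply: hv => // y yW vy.
  by exfalso; move/negP: nu; apply; apply/exists_inP; exists y.
have nv P : P \in S -> P != [set v] by move=> PS; apply: contraNneq vS => <-.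
have hS' P' : P' \in [set P :\ v | P in S] -> is_gpath e P' /\ P' \subset W :\ v.
  case/imsetP => P PS ->; have [gP sP] := hS _ PS; split; last by apply: setSD.
  case: (boolP (v \in P)) => vP; first by case: (rem_leaf gP sP vP lv (nv _ PS)).
  by rewrite (_ : P :\ v = P) //; apply/setP => z; rewrite !inE; case: eqVneq => // ->; rewrite (negbTE vP).
have cW' : #|W :\ v| <= n by move: cW; rewrite (cardsD1 v W) vW.
have nS' : [set P :\ v | P in S] != set0 by apply/set0Pn; exists (P0 :\ v); apply: imset_f.
have [P' [a [b [/imsetP [P PS ->] ab H]]]] := IH _ _ cW' hS' nS'.
exists P, a, b; split => // Q QS /touchP tPQ.
have [gP sP] := hS _ PS; have [gQ sQ] := hS _ QS.
have := H (Q :\ v) (imset_f _ QS) (introT (touchP _ _) (touch_rem gP gQ sP sQ lv (nv _ PS) (nv _ QS) tPQ)).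
by rewrite !inE => /orP [/andP [_ ->]|/andP [_ ->]]; rewrite ?orbT.
Qed.

Lemma anti_sym P Q : anticomplete e P Q -> anticomplete e Q P.
Proof.
move=> H; apply/negPn; apply/negP => /touchP /touch_sym /touchP.
by rewrite H.
Qed.

Lemma anti_self P : is_gpath e P -> ~~ anticomplete e P P.
Proof.
by move=> /gpath_n0 [x xP]; apply/touchP; exists x, x; rewrite xP eqxx.
Qed.

Lemma greedy (s : nat) N : forall (F : 'I_s -> {set {set T}}) (m : 'I_s -> nat),
  (forall i P, P \in F i -> is_gpath e P) ->
  (forall i P Q, P \in F i -> Q \in F i -> P != Q -> anticomplete e P Q) ->
  \sum_i m i = N -> (forall i, 0 < m i -> N <= #|F i|) ->
  exists Sel : 'I_s -> {set {set T}},
    [/\ forall i, Sel i \subset F i, forall i, #|Sel i| = m i &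
      forall i i' P Q, P \in Sel i -> Q \in Sel i' -> (i, P) != (i', Q) ->
        anticomplete e P Q].
Proof.
elim: N => [|N IH] F m gF aF sm cF.
  exists (fun _ => set0); split => //; last by move=> i i' P Q; rewrite inE.
    by move=> i; apply: sub0set.
  move=> i; rewrite /= cards0; apply/eqP; rewrite eq_sym -leqn0 -sm.
  by rewrite (bigD1 i) //= leq_addr.
have [i0 mi0] : exists i0, 0 < m i0.
  case: (pickP (fun i => 0 < m i)) => [i0 H|H]; first by exists i0.
  by move: sm; rewrite big1 // => i; move: (H i) => /= /negbT; rewrite lt0n negbK => /eqP.
pose S := \bigcup_(i | 0 < m i) F i.
have nS : S != set0.
  have /card_gt0P [P PF] : 0 < #|F i0| := leq_trans (ltn0Sn N) (cF _ mi0).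
  by apply/set0Pn; exists P; apply/bigcupP; exists i0.
have hS : forall P, P \in S -> is_gpath e P /\ P \subset setT.
  by move=> P /bigcupP [i _ PF]; split; [exact: gF PF | exact: subsetT].
have [P [a [b [PS ab HP]]]] := key (leqnn _) hS nS.
case/bigcupP: PS => i1 mi1 PF.
pose A := [set Q | anticomplete e P Q].
pose F' j := F j :&: A.
pose m' j := if j == i1 then (m i1).-1 else m j.
have sm' : \sum_i m' i = N.
  apply/eqP; rewrite -eqSS -sm (bigD1 i1) //= [in X in _ == X](bigD1 i1) //=.
  rewrite /m' eqxx -addSn prednK //; apply/eqP; congr (_ + _).
  by apply: eq_bigr => j /negbTE ->.
have gF' i Q : Q \in F' i -> is_gpath e Q by rewrite inE => /andP [/gF].
have aF' i Q R : Q \in F' i -> R \in F' i -> Q != R -> anticomplete e Q R.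
  by rewrite !inE => /andP [QF _] /andP [RF _]; exact: aF QF RF.
have ab' x y : (x == a) || (x == b) -> (y == a) || (y == b) -> (x == y) || e x y.
  by case/orP=> /eqP->; case/orP=> /eqP->; rewrite ?eqxx // eq_sym esym.
have cF' i : 0 < m' i -> N <= #|F' i|.
  move=> mi; have mi' : 0 < m i.
    by move: mi; rewrite /m'; case: eqP => [->|//]; rewrite mi1.
  have := cF _ mi'; rewrite -(cardsID A (F i)) -/(F' i) => H.
  suff : #|F i :\: A| <= 1 by move=> H1; rewrite -ltnS; apply: leq_trans H _; rewrite -addn1 leq_add2l.
  apply/card_le1_eqP => Q R; rewrite !inE => /andP [nQ QF] /andP [nR RF].
  have QS : Q \in S by apply/bigcupP; exists i.
  have RS : R \in S by apply/bigcupP; exists i.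
  have hQ := HP _ QS nQ; have hR := HP _ RS nR.
  apply/eqP; apply: (contraNT (aF _ _ _ RF QF)); apply/touchP.
  have [x xQ xab] : exists2 x, x \in Q & (x == a) || (x == b).
    by case/orP: hQ => ?; [exists a | exists b]; rewrite ?eqxx ?orbT.
  have [y yR yab] : exists2 y, y \in R & (y == a) || (y == b).
    by case/orP: hR => ?; [exists a | exists b]; rewrite ?eqxx ?orbT.
  by exists y, x; split => //; apply: ab'.
have [Sel' [sub' card' anti']] := IH F' m' gF' aF' sm' cF'.
have gP := gF _ _ PF.
have PSel' : P \notin Sel' i1.
  apply: contra (anti_self gP) => /(subsetP (sub' i1)); rewrite !inE => /andP [_].
  by [].
have inA i Q : Q \in Sel' i -> anticomplete e P Q.
  by move=> /(subsetP (sub' i)); rewrite !inE => /andP [].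
exists (fun i => if i == i1 then P |: Sel' i else Sel' i); split.
- move=> i; case: eqP => [->|_].
    rewrite subUset sub1set PF /=; apply: subset_trans (sub' i1) _; exact: subsetIl.
  by apply: subset_trans (sub' i) _; exact: subsetIl.
- move=> i; case: eqP => [->|ne]; last by rewrite card' /m'; case: eqP.
  by rewrite cardsU1 PSel' card' /m' eqxx add1n prednK.
- move=> i i' Q R; case: eqP => [->|_] QS; case: eqP => [->|_] RS ne.
  + move: QS RS ne; rewrite !inE => /orP [/eqP->|QS] /orP [/eqP->|RS] ne.
    * by move: ne; rewrite eqxx.
    * exact: inA RS.
    * exact/anti_sym/(inA _ _ QS).
    * exact: anti' QS RS ne.
  + move: QS ne; rewrite !inE => /orP [/eqP->|QS] ne; first exact: inA RS.
    exact: anti' QS RS ne.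
  + move: RS ne; rewrite !inE => /orP [/eqP->|RS] ne; first exact/anti_sym/(inA _ _ QS).
    exact: anti' QS RS ne.
  + exact: anti' QS RS ne.
Qed.
End S.

Theorem mainTheorem7 (T : finType) (e : rel T) (k s : nat)
    (Fam : 'I_s -> {set {set T}}) :
  forest e ->
  (forall i : 'I_s, #|Fam i| = s`! * k) ->
  (forall (i : 'I_s) (P : {set T}), P \in Fam i -> is_gpath e P) ->
  (forall (i : 'I_s) (P Q : {set T}), P \in Fam i -> Q \in Fam i -> P != Q ->
     anticomplete e P Q) ->
  exists Pch : 'I_s -> 'I_k -> {set T},
    (forall i j, Pch i j \in Fam i) /\
    (forall (i i' : 'I_s) (j j' : 'I_k), (i, j) != (i', j') ->
       anticomplete e (Pch i j) (Pch i' j')).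
Proof.
move=> [[esym eirr] nocyc] cF gF aF.
have sm : \sum_(i < s) (fun _ => k) i = s * k by rewrite sum_nat_const card_ord.
have cF' : forall i, 0 < (fun _ : 'I_s => k) i -> s * k <= #|Fam i|.
  by move=> i _; rewrite cF leq_mul2r fact_geq orbT.
have [Sel [sub card anti]] := greedy esym eirr nocyc gF aF sm cF'.
have inS i (j : 'I_k) : nth set0 (enum (Sel i)) j \in Sel i.
  by rewrite -mem_enum; apply: mem_nth; rewrite -cardE card.
exists (fun i j => nth set0 (enum (Sel i)) j); split.
  by move=> i j; apply: (subsetP (sub i)).
move=> i i' j j' ne; apply: anti; [exact: inS | exact: inS |].
case: (eqVneq i i') => [eii|nii]; last by rewrite xpair_eqE (negbTE nii).
subst i'; rewrite xpair_eqE eqxx /=.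
have nj : j != j' by move: ne; rewrite xpair_eqE eqxx.
by rewrite nth_uniq ?enum_uniq // -cardE card.
Qed.
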